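(* If $G \le \mathrm{Sym}(\mathbb{N})$ is a maximal cofinitary group, then the natural action of $G$ on $\mathbb{N}$ (given by $g\cdot n = g(n)$) has only finitely many orbits.
   Context: $\mathrm{Sym}(\mathbb{N})$ is the group of bijections $\mathbb{N}\to\mathbb{N}$ under composition. A permutation is cofinitary if it is the identity or has only finitely many fixed points. A subgroup $G\le\mathrm{Sym}(\mathbb{N})$ is a cofinitary group if all its elements are cofinitary; it is a maximal cofinitary group if it is cofinitary and not properly contained in another cofinitary subgroup of $\mathrm{Sym}(\mathbb{N})$. *)

(* Defs.v *)
(* Subsets of Sym(N) are predicates on functions nat -> nat;
   equality of permutations is (via functional extensionality) pointwise. *)
From Stdlib Require Import List.

Definition is_bij (f : nat -> nat) : Prop :=
  exists g : nat -> nat, (forall n, g (f n) = n) /\ (forall n, f (g n) = n).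

Definition is_subgroup_Sym (G : (nat -> nat) -> Prop) : Prop :=
  (forall f, G f -> is_bij f) /\
  G (fun n => n) /\
  (forall f g, G f -> G g -> G (fun n => f (g n))) /\
  (forall f, G f -> exists g, G g /\ (forall n, g (f n) = n) /\ (forall n, f (g n) = n)).

Definition cofinitary (f : nat -> nat) : Prop :=
  (forall n, f n = n) \/ (exists N, forall n, f n = n -> n < N).

Definition cofinitary_group (G : (nat -> nat) -> Prop) : Prop :=
  is_subgroup_Sym G /\ (forall f, G f -> cofinitary f).

Definition maximal_cofinitary_group (G : (nat -> nat) -> Prop) : Prop :=
  cofinitary_group G /\
  forall H : (nat -> nat) -> Prop,
    cofinitary_group H -> (forall f, G f -> H f) -> (forall f, H f -> G f).

Definition same_orbit (G : (nat -> nat) -> Prop) (n m : nat) : Prop :=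
  exists g, G g /\ g n = m.

Definition finitely_many_orbits (G : (nat -> nat) -> Prop) : Prop :=
  exists reps : list nat, forall n, exists r, In r reps /\ same_orbit G r n.

(* Main.v *)
Require Import Defs.
From Stdlib Require Import List Arith Lia Classical ClassicalEpsilon Cantor.
Import ListNotations.

Inductive letter := LG (g : nat -> nat) | LH.

Definition ev (h : nat -> nat) (a : letter) (x : nat) : nat :=
  match a with LG g => g x | LH => h x end.

Fixpoint eval (h : nat -> nat) (l : list letter) (x : nat) : nat :=
  match l with [] => x | a :: t => ev h a (eval h t x) end.

Lemma eval_app h l1 l2 x : eval h (l1 ++ l2) x = eval h l1 (eval h l2 x).
Proof. induction l1; simpl; congruence. Qed.

Lemma preim_bnd (f T : nat -> nat) (HT : forall x, T (f x) = x) M :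
  exists N, forall x, f x < M -> x < N.
Proof.
  induction M.
  - exists 0; intros; lia.
  - destruct IHM as [N HN]. exists (max N (S (T M))). intros x Hx.
    destruct (Nat.eq_dec (f x) M) as [E|E].
    + rewrite <- (HT x), E. lia.
    + specialize (HN x ltac:(lia)). lia.
Qed.

Lemma cof_ext f f' : (forall n, f n = f' n) -> cofinitary f -> cofinitary f'.
Proof.
  intros E [H|[N H]]; [left|right].
  - intros n; rewrite <- E; auto.
  - exists N; intros n Hn; apply H; rewrite E; auto.
Qed.

Lemma rot (a b L : nat -> nat) (Hab : forall x, b (a x) = x) :
  cofinitary (fun x => a (L x)) -> cofinitary (fun x => L (a x)).
Proof.
  intros [H|[N H]].
  - left. intros x. specialize (H (a x)). simpl in H.
    rewrite <- (Hab (L (a x))), H. apply Hab.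
  - right. destruct (preim_bnd a b Hab N) as [N' HN']. exists N'.
    intros x Hx. apply HN'. apply H. simpl. now rewrite Hx.
Qed.

Lemma rot_rev (a b L : nat -> nat) (Hab : forall x, b (a x) = x)
  (Hba : forall x, a (b x) = x) :
  cofinitary (fun x => L (a x)) -> cofinitary (fun x => a (L x)).
Proof.
  intros H.
  assert (H1 : cofinitary (fun x => b (a (L (a x))))).
  { eapply cof_ext; [|exact H]. intros n; simpl. now rewrite Hab. }
  apply (rot b a (fun x => a (L (a x))) Hba) in H1.
  eapply cof_ext; [|exact H1]. intros n; simpl. now rewrite Hba.
Qed.

Fixpoint Sw (h : nat -> nat) (a : nat -> nat -> nat) (k x : nat) : nat :=
  match k with 0 => x | S k => h (a k (Sw h a k x)) end.

Lemma max_ex (r : nat -> nat) n : 1 <= n -> exists k, k < n /\ forall j, j < n -> r j <= r k.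
Proof.
  induction n; intros Hn; [lia|].
  destruct n.
  - exists 0; split; [lia|]; intros j Hj; replace j with 0 by lia; lia.
  - destruct IHn as [k [Hk Hmax]]; [lia|].
    destruct (le_lt_dec (r (S n)) (r k)).
    + exists k; split; [lia|]; intros j Hj.
      destruct (Nat.eq_dec j (S n)); [subst; lia|]. apply Hmax; lia.
    + exists (S n); split; [lia|]; intros j Hj.
      destruct (Nat.eq_dec j (S n)); [subst; lia|]. specialize (Hmax j ltac:(lia)); lia.
Qed.

Lemma union_bnd (P : nat -> nat -> Prop) n :
  (forall k, k < n -> exists N, forall x, P k x -> x < N) ->
  exists N, forall x, (exists k, k < n /\ P k x) -> x < N.
Proof.
  induction n; intros H.
  - exists 0. intros x [k [Hk _]]; lia.
  - destruct IHn as [N HN]. { intros k Hk; apply H; lia. }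
    destruct (H n ltac:(lia)) as [M HM].
    exists (max N M). intros x [k [Hk Hx]].
    destruct (Nat.eq_dec k n).
    + subst. specialize (HM x Hx); lia.
    + assert (x < N) by (apply HN; exists k; split; [lia|auto]). lia.
Qed.


Definition good (G : (nat -> nat) -> Prop) (h rank : nat -> nat) : Prop :=
  (forall x, h (h x) = x) /\ (forall g x, G g -> rank (g x) = rank x) /\
  (forall x, rank (h x) <> rank x) /\
  (forall x y, rank x = rank y -> rank (h x) < rank x -> rank (h y) < rank y -> x = y).

Lemma key_walk G h rank (Hg : good G h rank) a n x :
  1 <= n -> (forall k, k < n -> G (a k)) -> Sw h a n x = x ->
  exists k, k < n /\ a k (Sw h a k x) = Sw h a k x.
Proof.
  destruct Hg as [Hinv [Hinvar [Hne Huniq]]].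
  intros Hn HG Hfix.
  destruct (max_ex (fun k => rank (Sw h a k x)) n Hn) as [k0 [Hk0 Hmax]].
  exists k0; split; auto.
  set (y := a k0 (Sw h a k0 x)).
  assert (Hy : rank y = rank (Sw h a k0 x)) by (apply Hinvar; auto).
  assert (Hexit : rank (h y) < rank y).
  { assert (rank (h y) <= rank y).
    { rewrite Hy. change (h y) with (Sw h a (S k0) x).
      destruct (Nat.eq_dec (S k0) n) as [E|E].
      - rewrite E, Hfix. apply (Hmax 0). lia.
      - apply Hmax. lia. }
    specialize (Hne y). lia. }
  assert (Hentry : rank (h (Sw h a k0 x)) < rank (Sw h a k0 x)).
  { destruct k0 as [|p].
    - assert (E : Sw h a 0 x = h (a (n-1) (Sw h a (n-1) x))).
      { simpl. rewrite <- Hfix at 1. replace n with (S (n-1)) at 1 by lia. reflexivity. }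
      assert (rank (h (Sw h a 0 x)) <= rank (Sw h a 0 x)).
      { rewrite E at 1. rewrite Hinv, Hinvar by (apply HG; lia). apply Hmax; lia. }
      specialize (Hne (Sw h a 0 x)); lia.
    - assert (rank (h (Sw h a (S p) x)) <= rank (Sw h a (S p) x)).
      { simpl (Sw h a (S p) x) at 1. rewrite Hinv, Hinvar by (apply HG; lia). apply Hmax; lia. }
      specialize (Hne (Sw h a (S p) x)); lia. }
  apply Huniq; auto.
Qed.

Lemma Sw_linv G h a (HGb : forall f, G f -> is_bij f) (Hinv : forall x, h (h x) = x) n :
  (forall k, k < n -> G (a k)) -> forall k, k <= n -> exists T, forall x, T (Sw h a k x) = x.
Proof.
  intros HG k. induction k; intros Hk.
  - exists (fun x => x); reflexivity.
  - destruct IHk as [T HT]; [lia|].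
    destruct (HGb (a k) (HG k ltac:(lia))) as [b [Hb1 Hb2]].
    exists (fun z => T (b (h z))). intros x; simpl. now rewrite Hinv, Hb1.
Qed.

Lemma key_lemma G h rank (HcG : cofinitary_group G) (Hg : good G h rank) a n :
  1 <= n -> (forall k, k < n -> G (a k) /\ ~ (forall m, a k m = m)) ->
  exists N, forall x, Sw h a n x = x -> x < N.
Proof.
  intros Hn Ha.
  destruct HcG as [[HGb [Hid [Hcomp Hinvs]]] Hcof].
  assert (HGa : forall k, k < n -> G (a k)) by (intros k Hk; apply Ha; auto).
  destruct (union_bnd (fun k x => a k (Sw h a k x) = Sw h a k x) n) as [N HN].
  { intros k Hk.
    destruct (Hcof (a k) (HGa k Hk)) as [Hid'|[M HM]].
    { exfalso; apply (proj2 (Ha k Hk)); auto. }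
    destruct (Sw_linv G h a HGb (proj1 Hg) n HGa k ltac:(lia)) as [T HT].
    destruct (preim_bnd (Sw h a k) T HT M) as [N HN].
    exists N. intros x Hx. apply HN, HM, Hx. }
  exists N. intros x Hx. apply HN. eapply key_walk; eauto.
Qed.

Definition hform (ps : list (nat -> nat)) : list letter :=
  flat_map (fun g => [LH; LG g]) ps.

Definition aps (ps : list (nat -> nat)) (k : nat) : nat -> nat :=
  nth (length ps - 1 - k) ps (fun z => z).

Lemma Sw_ext h a a' n x : (forall k z, k < n -> a k z = a' k z) -> Sw h a n x = Sw h a' n x.
Proof.
  induction n; intros E; simpl; auto.
  rewrite IHn by (intros; apply E; lia). now rewrite E by lia.
Qed.

Lemma hform_Sw h ps x : eval h (hform ps) x = Sw h (aps ps) (length ps) x.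
Proof.
  induction ps as [|g ps IH]; [reflexivity|].
  change (eval h (hform (g :: ps)) x) with (h (g (eval h (hform ps) x))).
  change (length (g :: ps)) with (S (length ps)).
  change (Sw h (aps (g :: ps)) (S (length ps)) x) with
    (h (aps (g :: ps) (length ps) (Sw h (aps (g :: ps)) (length ps) x))).
  assert (E1 : aps (g :: ps) (length ps) = g).
  { unfold aps. change (length (g :: ps)) with (S (length ps)).
    replace (S (length ps) - 1 - length ps) with 0 by lia. reflexivity. }
  rewrite E1, IH. f_equal. f_equal. apply Sw_ext. intros k z Hk. unfold aps.
  change (length (g :: ps)) with (S (length ps)).
  replace (S (length ps) - 1 - k) with (S (length ps - 1 - k)) by lia. reflexivity.
Qed.

Lemma hform_In g ps : In g ps -> In (LG g) (hform ps).
Proof.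
  induction ps; simpl; [tauto|]. intros [E|H]; subst; auto.
Qed.

Lemma key_list G h rank (HcG : cofinitary_group G) (Hg : good G h rank) ps :
  ps <> [] -> (forall g, In g ps -> G g /\ ~ (forall m, g m = m)) ->
  cofinitary (eval h (hform ps)).
Proof.
  intros Hne Hps. right.
  destruct (key_lemma G h rank HcG Hg (aps ps) (length ps)) as [N HN].
  { destruct ps; [congruence|simpl; lia]. }
  { intros k Hk. apply Hps. unfold aps. apply nth_In. lia. }
  exists N. intros x Hx. apply HN. now rewrite <- hform_Sw.
Qed.


Definition AdjG (l : list letter) := exists l1 l2 g g', l = l1 ++ LG g :: LG g' :: l2.
Definition AdjH (l : list letter) := exists l1 l2, l = l1 ++ LH :: LH :: l2.

Lemma structure l : ~ AdjG l -> ~ AdjH l ->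
  exists ps, l = hform ps \/ (exists g, l = LG g :: hform ps) \/ l = hform ps ++ [LH] \/
             (exists g, l = LG g :: hform ps ++ [LH]).
Proof.
  induction l as [|a t IH]; intros HG HH.
  - exists []. now left.
  - destruct IH as [ps Hps].
    { intros [l1 [l2 [g [g' E]]]]. apply HG. exists (a :: l1), l2, g, g'. simpl; congruence. }
    { intros [l1 [l2 E]]. apply HH. exists (a :: l1), l2. simpl; congruence. }
    destruct Hps as [E|[[g E]|[E|[g E]]]]; subst t; destruct a as [g0|].
    + exists ps. right; left. exists g0; auto.
    + destruct ps as [|g ps].
      * exists []. right; right; left. reflexivity.
      * exfalso. apply HH. exists [], (LG g :: hform ps). reflexivity.
    + exfalso. apply HG. exists [], (hform ps), g0, g. reflexivity.
    + exists (g :: ps). now left.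
    + exists ps. right; right; right. exists g0; auto.
    + exfalso. destruct ps as [|g ps].
      * apply HH. exists [], []. reflexivity.
      * apply HH. exists [], (LG g :: hform ps ++ [LH]). reflexivity.
    + exfalso. apply HG. exists [], (hform ps ++ [LH]), g0, g. reflexivity.
    + exists (g :: ps). right; right; left. reflexivity.
Qed.

Definition AllG (G : (nat -> nat) -> Prop) l := forall g, In (LG g) l -> G g.

Lemma hform_snoc ps g : hform (ps ++ [g]) = (hform ps ++ [LH]) ++ [LG g].
Proof. unfold hform. rewrite flat_map_app. simpl. now rewrite <- app_assoc. Qed.

Lemma main_cof G h rank (HcG : cofinitary_group G) (Hg : good G h rank) :
  forall n l, length l < n -> AllG G l -> cofinitary (eval h l).
Proof.
  pose proof HcG as [[HGb [Hid [Hcomp Hinvs]]] Hcof].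
  pose proof Hg as [Hinv [Hinvar [Hne Huniq]]].
  induction n as [|n IH]; intros l Hl HA; [lia|].
  destruct (classic (AdjG l)) as [[l1 [l2 [g [g' E]]]]|NG].
  { subst l. assert (HA' : AllG G (l1 ++ LG (fun x => g (g' x)) :: l2)).
    { intros f Hf. apply in_app_or in Hf. destruct Hf as [Hf|[Hf|Hf]].
      - apply HA, in_or_app; auto.
      - injection Hf as <-. apply Hcomp; apply HA; apply in_or_app; simpl; auto.
      - apply HA, in_or_app; simpl; auto. }
    assert (Hlen : length (l1 ++ LG (fun x => g (g' x)) :: l2) < n) by (clear -Hl; simpl in *; rewrite ?length_app in *; simpl in *; lia).
    eapply cof_ext; [|apply (IH _ Hlen HA')].
    intros x. rewrite !eval_app. reflexivity. }
  destruct (classic (AdjH l)) as [[l1 [l2 E]]|NH].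
  { subst l. assert (HA' : AllG G (l1 ++ l2)).
    { intros f Hf. apply in_app_or in Hf. apply HA, in_or_app. simpl. tauto. }
    assert (Hlen : length (l1 ++ l2) < n) by (clear -Hl; simpl in *; rewrite ?length_app in *; simpl in *; lia).
    eapply cof_ext; [|apply (IH _ Hlen HA')].
    intros x. rewrite !eval_app. simpl. now rewrite Hinv. }
  destruct (classic (exists l1 l2 g, l = l1 ++ LG g :: l2 /\ forall m, g m = m)) as
    [[l1 [l2 [g [E Hgid]]]]|NI].
  { subst l. assert (HA' : AllG G (l1 ++ l2)).
    { intros f Hf. apply in_app_or in Hf. apply HA, in_or_app. simpl. tauto. }
    assert (Hlen : length (l1 ++ l2) < n) by (clear -Hl; simpl in *; rewrite ?length_app in *; simpl in *; lia).
    eapply cof_ext; [|apply (IH _ Hlen HA')].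
    intros x. rewrite !eval_app. simpl. now rewrite Hgid. }
  assert (NI' : forall g, In (LG g) l -> ~ (forall m, g m = m)).
  { intros g Hin Hgid. apply in_split in Hin. destruct Hin as [l1 [l2 E]].
    apply NI. exists l1, l2, g; auto. }
  destruct (classic (exists m g g', l = LG g :: m ++ [LG g'])) as [[m [g [g' E]]]|N4].
  { subst l.
    assert (HAg : G g) by (apply HA; simpl; auto).
    assert (HAg' : G g') by (apply HA; simpl; right; apply in_or_app; simpl; auto).
    assert (HA' : AllG G (m ++ [LG (fun x => g' (g x))])).
    { intros f Hf. apply in_app_or in Hf. destruct Hf as [Hf|[Hf|[]]].
      - apply HA; simpl; right; apply in_or_app; auto.
      - injection Hf as <-. apply Hcomp; auto. }
    assert (Hlen : length (m ++ [LG (fun x => g' (g x))]) < n) by (clear -Hl; simpl in *; rewrite ?length_app in *; simpl in *; lia).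
    pose proof (IH _ Hlen HA') as Hc.
    destruct (HGb g HAg) as [b [Hb1 Hb2]].
    assert (Hc2 : cofinitary (fun x => (fun y => eval h m (g' y)) (g x))).
    { eapply cof_ext; [|exact Hc]. intros x. rewrite eval_app. reflexivity. }
    apply (rot_rev g b _ Hb1 Hb2) in Hc2.
    eapply cof_ext; [|exact Hc2]. intros x. simpl. rewrite eval_app. reflexivity. }
  destruct (classic (exists m, l = LH :: m ++ [LH])) as [[m E]|N5].
  { subst l.
    assert (HA' : AllG G m).
    { intros f Hf. apply HA; simpl; right; apply in_or_app; auto. }
    assert (Hlen : length (m) < n) by (clear -Hl; simpl in *; rewrite ?length_app in *; simpl in *; lia).
    pose proof (IH _ Hlen HA') as Hc.
    assert (Hc2 : cofinitary (fun x => (fun y => eval h m (h y)) (h x))).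
    { eapply cof_ext; [|exact Hc]. intros x. simpl. now rewrite Hinv. }
    apply (rot_rev h h _ Hinv Hinv) in Hc2.
    eapply cof_ext; [|exact Hc2]. intros x. simpl. rewrite eval_app. reflexivity. }
  assert (Hps : forall ps, (forall g, In (LG g) (hform ps) -> In (LG g) l) ->
             forall g, In g ps -> G g /\ ~ (forall m, g m = m)).
  { intros ps Hsub g Hin. apply hform_In in Hin. split; [apply HA|apply NI']; auto. }
  destruct (structure l NG NH) as [ps [E|[[g E]|[E|[g E]]]]]; subst l.
  - destruct ps as [|g ps].
    + left. intros; reflexivity.
    + apply (key_list G h rank HcG Hg); [congruence|]. apply Hps. auto.
  - destruct ps as [|g' ps] using rev_ind.
    + simpl. apply Hcof. apply HA. simpl; auto.
    + exfalso. apply N4. exists (hform ps ++ [LH]), g, g'. now rewrite hform_snoc.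
  - destruct ps as [|g ps].
    + right. exists 0. intros x Hx. exfalso. apply (Hne x). simpl in Hx. now rewrite Hx.
    + exfalso. apply N5. exists (LG g :: hform ps). reflexivity.
  - assert (HAg : G g) by (apply HA; simpl; auto).
    destruct (HGb g HAg) as [b [Hb1 Hb2]].
    assert (Hc : cofinitary (eval h (hform (ps ++ [g])))).
    { apply (key_list G h rank HcG Hg).
      - destruct ps; discriminate.
      - apply Hps. intros f Hf. rewrite hform_snoc in Hf.
        apply in_app_or in Hf. destruct Hf as [Hf|[Hf|[]]].
        + simpl; right; auto.
        + simpl; left; auto. }
    assert (Hc2 : cofinitary (fun x => (fun y => eval h (hform ps ++ [LH]) y) (g x))).
    { eapply cof_ext; [|exact Hc]. intros x. rewrite hform_snoc, eval_app. reflexivity. }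
    apply (rot_rev g b _ Hb1 Hb2) in Hc2.
    eapply cof_ext; [|exact Hc2]. intros x. reflexivity.
Qed.


Definition Hset (G : (nat -> nat) -> Prop) h (f : nat -> nat) : Prop :=
  exists l, AllG G l /\ forall x, f x = eval h l x.

Lemma eval_inv G h (HG : is_subgroup_Sym G) (Hinv : forall x, h (h x) = x) l :
  AllG G l -> exists l', AllG G l' /\ (forall x, eval h l' (eval h l x) = x) /\
                         (forall x, eval h l (eval h l' x) = x).
Proof.
  destruct HG as [HGb [Hid [Hcomp Hinvs]]].
  induction l as [|a t IH]; intros HA.
  - exists []. split; [intros g []|]. split; reflexivity.
  - destruct IH as [t' [HA' [E1 E2]]].
    { intros g Hg. apply HA. simpl; auto. }
    destruct a as [g|].
    + destruct (Hinvs g (HA g ltac:(simpl; auto))) as [g' [Hg' [F1 F2]]].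
      exists (t' ++ [LG g']). split.
      * intros f Hf. apply in_app_or in Hf. destruct Hf as [Hf|[Hf|[]]]; auto.
        injection Hf as <-; auto.
      * split; intros x; rewrite eval_app; simpl.
        -- now rewrite F1.
        -- now rewrite E2.
    + exists (t' ++ [LH]). split.
      * intros f Hf. apply in_app_or in Hf. destruct Hf as [Hf|[Hf|[]]]; auto. discriminate.
      * split; intros x; rewrite eval_app; simpl.
        -- now rewrite Hinv.
        -- now rewrite E2.
Qed.

Lemma Hset_group G h rank (HcG : cofinitary_group G) (Hg : good G h rank) :
  cofinitary_group (Hset G h).
Proof.
  pose proof HcG as [HG Hcof].
  pose proof HG as [HGb [Hid [Hcomp Hinvs]]].
  pose proof Hg as [Hinv _].
  split; [split; [|split; [|split]]|].
  - intros f [l [HA E]].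
    destruct (eval_inv G h HG Hinv l HA) as [l' [_ [E1 E2]]].
    exists (eval h l'). split; intros n; rewrite ?E; auto.
  - exists []. split; [intros g []|]. reflexivity.
  - intros f g [l1 [HA1 E1]] [l2 [HA2 E2]]. exists (l1 ++ l2). split.
    + intros f' Hf. apply in_app_or in Hf. destruct Hf; auto.
    + intros x. rewrite eval_app, E2, E1. reflexivity.
  - intros f [l [HA E]].
    destruct (eval_inv G h HG Hinv l HA) as [l' [HA' [E1 E2]]].
    exists (eval h l'). split; [exists l'; split; auto|].
    split; intros n; rewrite ?E; auto.
  - intros f [l [HA E]].
    eapply cof_ext; [|apply (main_cof G h rank HcG Hg (S (length l)) l ltac:(lia) HA)].
    intros; auto.
Qed.

Lemma not_max G h rank (Hmax : maximal_cofinitary_group G) (Hg : good G h rank) : False.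
Proof.
  destruct Hmax as [HcG Hmax].
  assert (Hsub : forall f, G f -> Hset G h f).
  { intros f Hf. exists [LG f]. split; [|reflexivity].
    intros g [E|[]]. injection E as <-. auto. }
  pose proof (Hmax _ (Hset_group G h rank HcG Hg) Hsub h) as HGh.
  destruct Hg as [_ [Hinvar [Hne _]]].
  apply (Hne 0). apply Hinvar. apply HGh.
  exists [LH]. split; [|reflexivity]. intros g [E|[]]; discriminate.
Qed.


Lemma least_ex (P : nat -> Prop) : (exists n, P n) -> exists n, P n /\ forall y, y < n -> ~ P y.
Proof.
  intros [n Hn]. apply NNPP. intros Hno.
  assert (A : forall k y, y < k -> ~ P y).
  { induction k; intros y Hy; [lia|].
    destruct (Nat.eq_dec y k); [|apply IHk; lia]. subst.
    intros Hk. apply Hno. exists k. split; auto. }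
  exact (A (S n) n ltac:(lia) Hn).
Qed.

Definition dec (P : nat -> Prop) (y : nat) : nat :=
  if excluded_middle_informative (P y) then 1 else 0.

Fixpoint cnt (P : nat -> Prop) (n : nat) : nat :=
  match n with 0 => 0 | S n => cnt P n + dec P n end.

Lemma dec_le P y : dec P y <= 1.
Proof. unfold dec; destruct excluded_middle_informative; lia. Qed.

Lemma dec_true P y : P y -> dec P y = 1.
Proof. unfold dec; destruct excluded_middle_informative; tauto. Qed.

Lemma cnt_le P n : cnt P n <= n.
Proof. induction n; simpl; [lia|]. pose proof (dec_le P n); lia. Qed.

Lemma cnt_mono P m n : m <= n -> cnt P m <= cnt P n.
Proof. induction 1; simpl; lia. Qed.

Lemma cnt_strict P x y : P x -> x < y -> cnt P x < cnt P y.
Proof.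
  intros Hx Hxy. pose proof (cnt_mono P (S x) y Hxy). simpl in H.
  rewrite dec_true in H; auto. lia.
Qed.

Lemma cnt_hit P m k : k < cnt P m -> exists n, n < m /\ P n /\ cnt P n = k.
Proof.
  induction m; simpl; intros Hk; [lia|].
  destruct (Nat.lt_ge_cases k (cnt P m)) as [H|H].
  - destruct (IHm H) as [n [? ?]]. exists n; split; [lia|auto].
  - unfold dec in Hk. destruct excluded_middle_informative as [Hp|Hp]; [|lia].
    exists m. split; [lia|split; auto; lia].
Qed.

Lemma cnt_surj P : (forall N, exists x, N <= x /\ P x) -> forall k, exists n, P n /\ cnt P n = k.
Proof.
  intros Hinf k.
  assert (U : forall k, exists m, k <= cnt P m).
  { induction k0.
    - exists 0; lia.
    - destruct IHk0 as [m Hm]. destruct (Hinf m) as [x [Hx Px]].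
      exists (S x). simpl. rewrite dec_true by auto. pose proof (cnt_mono P m x Hx). lia. }
  destruct (U (S k)) as [m Hm].
  destruct (cnt_hit P m k ltac:(lia)) as [n [_ [Pn Cn]]]. eauto.
Qed.

Arguments to_nat : simpl never.
Arguments of_nat : simpl never.
Definition Hp (p : nat * nat) : nat * nat :=
  match p with
  | (k, S i) => (S (S (to_nat (k, i))), 0)
  | (0, 0) => (1, 0)
  | (1, 0) => (0, 0)
  | (S (S k'), 0) => (fst (of_nat k'), S (snd (of_nat k')))
  end.

Lemma to_nat_ge x y : x <= to_nat (x, y).
Proof. pose proof (to_nat_non_decreasing x y). lia. Qed.

Lemma Hp_S k i : Hp (k, S i) = (S (S (to_nat (k, i))), 0).
Proof. destruct k as [|[|]]; reflexivity. Qed.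

Lemma Hp_SS k : Hp (S (S k), 0) = (fst (of_nat k), S (snd (of_nat k))).
Proof. reflexivity. Qed.

Lemma Hp_inv p : Hp (Hp p) = p.
Proof.
  destruct p as [k [|i]].
  - destruct k as [|[|k']]; [reflexivity|reflexivity|].
    rewrite Hp_SS, Hp_S, <- surjective_pairing, cancel_to_of. reflexivity.
  - rewrite Hp_S, Hp_SS, cancel_of_to. reflexivity.
Qed.

Lemma Hp_ne p : fst (Hp p) <> fst p.
Proof.
  destruct p as [k [|i]].
  - destruct k as [|[|k']]; [simpl; auto|simpl; auto|].
    rewrite Hp_SS. simpl fst.
    pose proof (to_nat_ge (fst (of_nat k')) (snd (of_nat k'))).
    rewrite <- surjective_pairing, cancel_to_of in H. lia.
  - rewrite Hp_S. simpl fst. pose proof (to_nat_ge k i). lia.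
Qed.

Lemma Hp_down p : fst (Hp p) < fst p -> snd p = 0.
Proof.
  destruct p as [k [|i]]; [reflexivity|].
  rewrite Hp_S. simpl fst. pose proof (to_nat_ge k i). lia.
Qed.

Lemma orbit_refl G (HG : is_subgroup_Sym G) x : same_orbit G x x.
Proof. destruct HG as [_ [Hid _]]. exists (fun n => n); auto. Qed.

Lemma orbit_sym G (HG : is_subgroup_Sym G) x y : same_orbit G x y -> same_orbit G y x.
Proof.
  destruct HG as [_ [_ [_ Hinvs]]]. intros [g [Hg E]].
  destruct (Hinvs g Hg) as [g' [Hg' [F1 F2]]]. exists g'; split; auto. subst; auto.
Qed.

Lemma orbit_trans G (HG : is_subgroup_Sym G) x y z :
  same_orbit G x y -> same_orbit G y z -> same_orbit G x z.
Proof.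
  destruct HG as [_ [_ [Hcomp _]]]. intros [g [Hg E]] [g' [Hg' E']].
  exists (fun n => g' (g n)); split; auto. subst; auto.
Qed.

Lemma build G (HG : is_subgroup_Sym G) (Hno : ~ finitely_many_orbits G) :
  exists h rank, good G h rank.
Proof.
  assert (LE : forall x, exists r, same_orbit G r x /\ forall y, y < r -> ~ same_orbit G y x).
  { intros x. apply least_ex. exists x. apply orbit_refl; auto. }
  set (o := fun x => proj1_sig (constructive_indefinite_description _ (LE x))).
  assert (Ho1 : forall x, same_orbit G (o x) x).
  { intros x. unfold o. destruct constructive_indefinite_description as [r [? ?]]; auto. }
  assert (Ho2 : forall x y, y < o x -> ~ same_orbit G y x).
  { intros x. unfold o. destruct constructive_indefinite_description as [r [? ?]]; auto. }
  assert (Hoinv : forall x x', same_orbit G x x' -> o x = o x').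
  { intros x x' Hxx'.
    destruct (Nat.lt_trichotomy (o x) (o x')) as [L|[E|L]]; auto; exfalso.
    - apply (Ho2 x' (o x) L). eapply orbit_trans; eauto.
    - apply (Ho2 x (o x') L). eapply orbit_trans; eauto. apply orbit_sym; auto. }
  set (R := fun x => forall y, y < x -> ~ same_orbit G y x).
  assert (HRo : forall r, R r -> o r = r).
  { intros r Hr. destruct (Nat.lt_trichotomy (o r) r) as [L|[E|L]]; auto; exfalso.
    - apply (Hr _ L). apply Ho1.
    - apply (Ho2 r r L). apply orbit_refl; auto. }
  assert (HRinf : forall N, exists x, N <= x /\ R x).
  { intros N. apply NNPP. intros Hn. apply Hno. exists (seq 0 N). intros n.
    exists (o n). split; [|apply Ho1].
    apply in_seq. split; [lia|].
    destruct (Nat.lt_ge_cases (o n) N) as [L|L]; [lia|]. exfalso. apply Hn.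
    exists (o n). split; auto. intros y Hy Hyo. apply (Ho2 n y Hy).
    eapply orbit_trans; eauto. }
  set (c := fun x => fst (of_nat (cnt R (o x)))).
  assert (Hcinv : forall g x, G g -> c (g x) = c x).
  { intros g x Hg. unfold c. rewrite (Hoinv x (g x)); auto. exists g; auto. }
  assert (Hcinf : forall k N, exists x, N <= x /\ c x = k).
  { intros k N. destruct (cnt_surj R HRinf (to_nat (k, N))) as [r [Hr Cr]].
    exists r. split.
    - pose proof (cnt_le R r). pose proof (to_nat_non_decreasing k N). lia.
    - unfold c. rewrite HRo, Cr, cancel_of_to by auto. reflexivity. }
  set (idx := fun x => cnt (fun y => c y = c x) x).
  set (e := fun x => (c x, idx x)).
  assert (Heinj : forall x y, e x = e y -> x = y).
  { intros x y E. unfold e in E. injection E as Ec Ei. unfold idx in Ei.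
    rewrite Ec in Ei.
    destruct (Nat.lt_trichotomy x y) as [L|[E|L]]; auto; exfalso.
    - pose proof (cnt_strict (fun z => c z = c y) x y Ec L). lia.
    - pose proof (cnt_strict (fun z => c z = c y) y x eq_refl L). lia. }
  assert (Hesurj : forall p, exists x, e x = p).
  { intros [k i]. destruct (cnt_surj (fun z => c z = k) (Hcinf k) i) as [x [Cx Ix]].
    exists x. unfold e, idx. rewrite Cx. now rewrite Ix. }
  set (d := fun p => proj1_sig (constructive_indefinite_description _ (Hesurj p))).
  assert (Hed : forall p, e (d p) = p).
  { intros p. unfold d. destruct constructive_indefinite_description; auto. }
  assert (Hde : forall x, d (e x) = x).
  { intros x. apply Heinj. apply Hed. }
  exists (fun x => d (Hp (e x))), c.
  assert (Hc : forall x, c x = fst (e x)) by reflexivity.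
  split; [|split; [|split]].
  - intros x. rewrite Hed, Hp_inv. apply Hde.
  - exact Hcinv.
  - intros x. rewrite !Hc, Hed. apply Hp_ne.
  - intros x y Exy Dx Dy. rewrite !Hc, Hed in *.
    apply Heinj. rewrite (surjective_pairing (e x)), (surjective_pairing (e y)).
    rewrite (Hp_down _ Dx), (Hp_down _ Dy). rewrite <- !Hc in Exy. rewrite <- !Hc. now rewrite Exy.
Qed.


Theorem mainTheorem9 (G : (nat -> nat) -> Prop) :
  maximal_cofinitary_group G -> finitely_many_orbits G.
Proof.
  intros Hm. apply NNPP. intros Hno.
  destruct (build G (proj1 (proj1 Hm)) Hno) as [h [rank Hg]].
  exact (not_max G h rank Hm Hg).
Qed.
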